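(* Let $X,Y,Z$ be random variables on finite alphabets $\mathcal{X},\mathcal{Y},\mathcal{Z}$ with a given joint distribution. For each $y\in\mathcal{Y}$ with $\Pr(Y=y)>0$, let $(A_y,B_y,C_y)$ be the random triple on $\mathcal{X}\times\mathcal{Y}\times\mathcal{Z}$ defined by $$\Pr(A_y=x,B_y=y',C_y=z)=\begin{cases}0 & \text{if } \Pr(Z=z)=0,\\ \dfrac{\Pr(X=x,Y=y',Z=z)\,\Pr(Z=z\mid Y=y)}{\Pr(Z=z)} & \text{otherwise.}\end{cases}$$ Then $$H(X\mid Z)=\sum_{y\in\mathcal{Y},\,\Pr(Y=y)>0}\Pr(Y=y)\,H(A_y\mid C_y).$$
   Context: $H$ denotes Shannon entropy. The triple $(A_y,B_y,C_y)$ is the paper's ''do-operation'' applied to the joint distribution of $(X,Y,Z)$ with the distribution of $Z$ given $Y=y$ as the new target marginal. *)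

(* Defs.v *)
From mathcomp Require Import all_boot all_order all_algebra.
From mathcomp Require Import reals exp.
Set Implicit Arguments. Unset Strict Implicit. Unset Printing Implicit Defensive.
Import Order.TTheory GRing.Theory Num.Theory.
Local Open Scope ring_scope.

Section Info.
Variables (R : realType) (TX TY TZ : finType).

Definition is_distr (P : TX -> TY -> TZ -> R) :=
  (forall x y z, 0 <= P x y z) /\ \sum_x \sum_y \sum_z P x y z = 1.

Definition log2 (t : R) : R := ln t / ln 2.

Definition margZ (P : TX -> TY -> TZ -> R) z : R := \sum_x \sum_y P x y z.
Definition margY (P : TX -> TY -> TZ -> R) y : R := \sum_x \sum_z P x y z.
Definition margYZ (P : TX -> TY -> TZ -> R) y z : R := \sum_x P x y z.
Definition margXZ (P : TX -> TY -> TZ -> R) x z : R := \sum_y P x y z.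

Definition condEntXZ (P : TX -> TY -> TZ -> R) : R :=
  - \sum_x \sum_z (if margXZ P x z == 0 then 0
                   else margXZ P x z * log2 (margXZ P x z / margZ P z)).

(* The do-operation: joint law of (A_y, B_y, C_y). Pr(Z=z | Y=y) = Pr(Y=y,Z=z)/Pr(Y=y). *)
Definition doOp (P : TX -> TY -> TZ -> R) (y : TY) : TX -> TY -> TZ -> R :=
  fun x y' z => if margZ P z == 0 then 0
                else P x y' z * (margYZ P y z / margY P y) / margZ P z.

End Info.

(* Main.v *)
Require Import Defs.
From mathcomp Require Import all_boot all_order all_algebra.
From mathcomp Require Import reals exp.
Import Order.TTheory GRing.Theory Num.Theory.
Local Open Scope ring_scope.

Section Aux.
Variables (R : realType) (TX TY TZ : finType) (P : TX -> TY -> TZ -> R).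
Hypothesis P0 : forall x y z, 0 <= P x y z.

Definition cc (y : TY) (z : TZ) : R :=
  if margZ P z == 0 then 0 else (margYZ P y z / margY P y) / margZ P z.
Definition ff (x : TX) (z : TZ) : R :=
  if margXZ P x z == 0 then 0 else margXZ P x z * log2 (margXZ P x z / margZ P z).

Lemma margY_ge0 y : 0 <= margY P y.
Proof. by apply: sumr_ge0 => x _; apply: sumr_ge0. Qed.

Lemma margY0 y z : margY P y = 0 -> margYZ P y z = 0.
Proof.
move=> /eqP; rewrite psumr_eq0; last by move=> x _; apply: sumr_ge0.
move=> /allP H; apply: big1 => x _.
have /implyP/(_ isT)/eqP := H x (mem_index_enum x).
move/eqP; rewrite psumr_eq0 // => /allP H2.
by apply/eqP; have := H2 z (mem_index_enum z); rewrite implyTb.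
Qed.

Lemma margZ0 x z : margZ P z = 0 -> margXZ P x z = 0.
Proof.
move=> /eqP; rewrite psumr_eq0; last by move=> x' _; apply: sumr_ge0.
move=> /allP H.
have /implyP/(_ isT) := H x (mem_index_enum x).
by move/eqP.
Qed.

Lemma margXZ_do y x z : margXZ (doOp P y) x z = margXZ P x z * cc y z.
Proof.
rewrite /margXZ /doOp /cc; have [Hz|Hz] := eqVneq (margZ P z) 0.
  by rewrite mulr0 big1 // => y' _; rewrite Hz eqxx.
rewrite [RHS]big_distrl /=; apply: eq_bigr => y' _; by rewrite !mulrA.
Qed.

Lemma margZ_do y z : margZ (doOp P y) z = margZ P z * cc y z.
Proof.
rewrite /cc; have [Hz|Hz] := eqVneq (margZ P z) 0.
  rewrite mulr0 /margZ big1 // => x _; rewrite big1 // => y' _; by rewrite /doOp Hz eqxx.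
rewrite {2}/margZ [RHS]big_distrl /=; apply: eq_bigr => x _.
rewrite [RHS]big_distrl /=; apply: eq_bigr => y' _.
by rewrite /doOp (negbTE Hz) !mulrA.
Qed.

Lemma term_do y x z :
  (if margXZ (doOp P y) x z == 0 then 0
   else margXZ (doOp P y) x z * log2 (margXZ (doOp P y) x z / margZ (doOp P y) z))
  = cc y z * ff x z.
Proof.
rewrite margXZ_do margZ_do /ff.
have [c0|c0] := eqVneq (cc y z) 0.
  by rewrite c0 !mulr0 eqxx mul0r.
have pz0 : margZ P z != 0.
  by apply/eqP => h; move: c0; rewrite /cc h eqxx eqxx.
rewrite mulf_eq0 (negbTE c0) orbF.
case: eqP => _; first by rewrite mulr0.
have -> : margXZ P x z * cc y z / (margZ P z * cc y z) = margXZ P x z / margZ P z.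
  by rewrite invfM mulrACA mulfV // mulr1.
by rewrite [LHS]mulrAC [LHS]mulrC.
Qed.

Lemma sum_cc z : margZ P z != 0 ->
  \sum_(y : TY | 0 < margY P y) margY P y * cc y z = 1.
Proof.
move=> Hz.
rewrite big_mkcond /=.
rewrite (eq_bigr (fun y => margYZ P y z / margZ P z)).
  rewrite -big_distrl /=.
  have -> : \sum_y margYZ P y z = margZ P z.
    by rewrite /margZ /margYZ exchange_big.
  by rewrite mulfV.
move=> y _; rewrite /cc (negbTE Hz).
case: ifP => Hy.
  rewrite mulrA mulrCA mulfV ?mulr1 //; by rewrite gt_eqF.
have : margY P y = 0.
  by apply/eqP; rewrite eq_le margY_ge0 andbT leNgt Hy.
by move/margY0 => ->; rewrite mul0r.
Qed.

End Aux.
Arguments cc {R TX TY TZ} P y z.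
Arguments ff {R TX TY TZ} P x z.

Theorem lemma1 (R : realType) (TX TY TZ : finType) (P : TX -> TY -> TZ -> R) :
  is_distr P ->
  condEntXZ P = \sum_(y : TY | 0 < margY P y) margY P y * condEntXZ (doOp P y).
Proof.
move=> [P0 _].
have Hdo : forall y, condEntXZ (doOp P y) = - \sum_x \sum_z cc P y z * ff P x z.
  move=> y; rewrite /condEntXZ; congr (- _); apply: eq_bigr => x _.
  by apply: eq_bigr => z _; exact: term_do.
under [RHS]eq_bigr => y _ do rewrite Hdo mulrN big_distrr.
rewrite sumrN /condEntXZ; congr (- _).
rewrite [RHS]exchange_big /=; apply: eq_bigr => x _.
under [RHS]eq_bigr => y _ do rewrite big_distrr.
rewrite [RHS]exchange_big /=; apply: eq_bigr => z _.
under [RHS]eq_bigr => y _ do rewrite mulrA.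
rewrite -big_distrl /=.
have [Hz|Hz] := eqVneq (margZ P z) 0.
  by rewrite /ff margZ0 // eqxx mulr0.
by rewrite sum_cc // mul1r.
Qed.
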